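(* Consider a multi-rate fluid assignment (rates $\theta_i^L$ for $\tau_i\in\tau$; $\theta_{i,j}^H$, $\theta_i^H$ for $\tau_i\in\tau_H$, $1\le j\le n_H$; window durations $w_1,\dots,w_{n_H}\ge 0$) such that $\theta_{i,j}^H=\theta_i^H$ for all $\tau_i\in\tau_H$ and all $1\le j\le n_H$. Then the multi-rate conditions (S1)–(S5) hold if and only if the dual-rate conditions (D1)–(D5) hold.
   Context: Task system $\tau$ on $m$ identical processors; each task $\tau_i$ has period/deadline $T_i>0$, criticality in $\{LO,HI\}$, WCETs $C_i^L\le C_i^H$, $u_i^L=C_i^L/T_i\le1$, $u_i^H=C_i^H/T_i\le1$; $\tau_H$ is the set of HI-tasks, $n_H=|\tau_H|$. All rates lie in $(0,1]$ (transition rates in $[0,1]$). The earliest completion window of $\tau_i\in\tau_H$ is the largest $k_i\in\{1,\dots,n_H+1\}$ with $\sum_{j:1\le j<k_i}w_j<T_i-C_i^L/\theta_i^L$; $R_i=\theta_{i,k_i}^H$ if $k_i\le n_H$ and $R_i=\theta_i^H$ otherwise; by convention $\theta_{i,n_H+1}^H:=\theta_i^H$. Multi-rate conditions: (S1) $\theta_i^L\ge u_i^L$ for all $\tau_i\in\tau$; (S2) $\sum_{\tau_i\in\tau}\theta_i^L\le m$; (S3) $\sum_{\tau_i\in\tau_H}\theta_{i,j}^H\le m$ for all $1\le j\le n_H$, and $\sum_{\tau_i\in\tau_H}\theta_i^H\le m$; (S4) for all $\tau_i\in\tau_H$: $\sum_{j<k_i}\theta_{i,j}^Hw_j+R_i(T_i-C_i^L/\theta_i^L-\sum_{j<k_i}w_j)\ge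 C_i^H-C_i^L$, $\theta_i^L\le\theta_{i,j}^H$ for $k_i\le j\le n_H$, and $\theta_i^L\le\theta_i^H$; (S5) for all $\tau_i\in\tau_H$: $\sum_{j<k_i}\theta_{i,j}^Hw_j\ge u_i^H\sum_{j<k_i}w_j$, $\theta_{i,j}^H\le\theta_{i,j+1}^H$ for $1\le j<k_i$, $\theta_{i,j}^H\ge u_i^H$ for $k_i\le j\le n_H$, and $\theta_i^H\ge u_i^H$. Dual-rate conditions: (D1) $\theta_i^L\ge u_i^L$ for all $\tau_i\in\tau$; (D2) $u_i^L/\theta_i^L+(u_i^H-u_i^L)/\theta_i^H\le1$ for all $\tau_i\in\tau_H$; (D3) $\theta_i^H\ge\theta_i^L$ for all $\tau_i\in\tau_H$; (D4) $\sum_{\tau_i\in\tau}\theta_i^L\le m$; (D5) $\sum_{\tau_i\in\tau_H}\theta_i^H\le m$. *)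

(* Defs.v *)
From HB Require Import structures.
From mathcomp Require Import all_boot all_order all_algebra.
Set Implicit Arguments. Unset Strict Implicit. Unset Printing Implicit Defensive.
Import Order.TTheory GRing.Theory Num.Theory.
Local Open Scope ring_scope.

Definition nHI (n : nat) (hi : 'I_n -> bool) : nat := #|[set i | hi i]|.

(* earliest completion window k_i: largest k in {1,..,nH+1} with
   sum_{1<=j<k} w_j < T - CL/thL  (defaults to 1 if no such k exists) *)
Definition ecw (R : realFieldType) (nH : nat) (w : nat -> R) (T CL thL : R) : nat :=
  \max_(k < nH.+2 | [&& (1 <= (k : nat))%N &
       (((k : nat) == 1%N) || (\sum_(1 <= j < k) w j < T - CL / thL))]) (k : nat).

(* theta^H_{i,j} extended by the convention theta^H_{i,nH+1} := theta^H_i *)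
Definition thHext (R : realFieldType) (nH : nat) (thHj : nat -> R) (thH : R) (j : nat) : R :=
  if (j <= nH)%N then thHj j else thH.

(* multi-rate conditions (S1)-(S5); task i has period T i, WCETs CL i, CH i,
   low rate thL i, window rates thHj i j (1<=j<=nH), final rate thH i;
   window durations w j (1<=j<=nH) *)
Definition multirate (R : realFieldType) (n m : nat) (hi : 'I_n -> bool)
  (T CL CH thL thH : 'I_n -> R) (thHj : 'I_n -> nat -> R) (w : nat -> R) : Prop :=
  let nH := nHI hi in
  let uL i := CL i / T i in
  let uH i := CH i / T i in
  [/\ (forall i, uL i <= thL i),
      \sum_i thL i <= m%:R,
      (forall j, (1 <= j <= nH)%N -> \sum_(i | hi i) thHj i j <= m%:R)
               /\ \sum_(i | hi i) thH i <= m%:R,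
      (forall i, hi i ->
                 let k := ecw nH w (T i) (CL i) (thL i) in
                 let Ri := thHext nH (thHj i) (thH i) k in
                 [/\ \sum_(1 <= j < k) thHj i j * w j
                       + Ri * (T i - CL i / thL i - \sum_(1 <= j < k) w j)
                       >= CH i - CL i,
                     (forall j, (k <= j <= nH)%N -> thL i <= thHj i j)
                   & thL i <= thH i])
    & (forall i, hi i ->
                 let k := ecw nH w (T i) (CL i) (thL i) in
                 [/\ \sum_(1 <= j < k) thHj i j * w j >= uH i * \sum_(1 <= j < k) w j,
                     (forall j, (1 <= j < k)%N ->
                        thHext nH (thHj i) (thH i) j <= thHext nH (thHj i) (thH i) j.+1),
                     (forall j, (k <= j <= nH)%N -> uH i <= thHj i j)
                   & uH i <= thH i])].

Definition dualrate (R : realFieldType) (n m : nat) (hi : 'I_n -> bool)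
  (T CL CH thL thH : 'I_n -> R) : Prop :=
  let uL i := CL i / T i in
  let uH i := CH i / T i in
  [/\ (forall i, uL i <= thL i),
      (forall i, hi i -> uL i / thL i + (uH i - uL i) / thH i <= 1),
      (forall i, hi i -> thL i <= thH i),
      \sum_i thL i <= m%:R
    & \sum_(i | hi i) thH i <= m%:R].

(* Main.v *)
Require Import Defs.
From HB Require Import structures.
From mathcomp Require Import all_boot all_order all_algebra.
From mathcomp Require Import ring lra.
Import Order.TTheory GRing.Theory Num.Theory.
Local Open Scope ring_scope.
Lemma ecw_bounds (R : realFieldType) nH (w : nat -> R) T CL thL :
  (1 <= ecw nH w T CL thL <= nH.+1)%N.
Proof.
rewrite /ecw; apply/andP; split.
  have := @leq_bigmax_cond _ (fun k : 'I_nH.+2 => [&& (1 <= (k : nat))%N &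
       (((k : nat) == 1%N) || (\sum_(1 <= j < k) w j < T - CL / thL))]) (fun k => (k:nat)) (inord 1).
  by rewrite inordK // eqxx /=; apply.
apply/bigmax_leqP => k _; rewrite -ltnS; exact: ltn_ord.
Qed.

Theorem lemma2 (R : realFieldType) (n m : nat) (hi : 'I_n -> bool)
  (T CL CH thL thH : 'I_n -> R) (thHj : 'I_n -> nat -> R) (w : nat -> R) :
  (0 < m)%N ->
  (forall i, 0 < T i) ->
  (forall i, 0 <= CL i <= CH i) ->
  (forall i, CL i / T i <= 1) ->
  (forall i, CH i / T i <= 1) ->
  (forall i, 0 < thL i <= 1) ->
  (forall i, hi i -> 0 < thH i <= 1) ->
  (forall i j, hi i -> (1 <= j <= nHI hi)%N -> 0 <= thHj i j <= 1) ->
  (forall j, (1 <= j <= nHI hi)%N -> 0 <= w j) ->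
  (forall i j, hi i -> (1 <= j <= nHI hi)%N -> thHj i j = thH i) ->
  (multirate m hi T CL CH thL thH thHj w <-> dualrate m hi T CL CH thL thH).
Proof.
move=> _ HT HC _ _ HL HH _ H9 Heq.
set nH := nHI hi.
have Hext : forall i j, hi i -> (1 <= j <= nH.+1)%N -> thHext nH (thHj i) (thH i) j = thH i.
  move=> i j hii /andP[j1 j2]; rewrite /thHext; case: ifP => // jn.
  by apply: Heq => //; rewrite j1 jn.
have Hsum : forall i k, hi i -> (k <= nH.+1)%N ->
    \sum_(1 <= j < k) thHj i j * w j = thH i * \sum_(1 <= j < k) w j.
  move=> i k hii kn; rewrite mulr_sumr; apply: eq_big_nat => j /andP[j1 j2].
  by rewrite Heq // j1 -ltnS (leq_trans j2 kn).
have Hkey : forall i, hi i ->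
   (CH i - CL i <= thH i * (T i - CL i / thL i)) =
   (CL i / T i / thL i + (CH i / T i - CL i / T i) / thH i <= 1).
  move=> i hii; have /andP[h0 _] := HH i hii; have /andP[l0 _] := HL i; have t0 := HT i.
  have -> : CL i / T i / thL i + (CH i / T i - CL i / T i) / thH i
      = (CH i - CL i + thH i * (CL i / thL i)) / (T i * thH i).
    by field; rewrite ?gt_eqF ?mulr_gt0.
  rewrite ler_pdivrMr ?mulr_gt0 // mul1r; apply/idP/idP => H; lra.
rewrite /multirate /dualrate /=.
split.
- move=> [S1 S2 [S3a S3b] S4 S5]; split => //.
  + move=> i hii; have [A _ _] := S4 i hii.
    have /andP[k1 k2] := @ecw_bounds R nH w (T i) (CL i) (thL i).
    rewrite Hext // ?k1 // Hsum // in A; rewrite -Hkey //; lra.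
  + by move=> i hii; have [] := S4 i hii.
- move=> [D1 D2 D3 D4 D5]; split => //.
  + split => // j jn; rewrite (eq_bigr (fun i => thH i)) // => i hii; exact: Heq.
  + move=> i hii; have /andP[k1 k2] := @ecw_bounds R nH w (T i) (CL i) (thL i).
    split; last exact: D3.
    * rewrite Hext // ?k1 // Hsum //.
      have := D2 i hii; rewrite -Hkey // => H; lra.
    * move=> j /andP[j1 j2]; rewrite Heq ?D3 // j2 andbT (leq_trans k1 j1) //.
  + have uH : forall i, hi i -> CH i / T i <= thH i.
      move=> i hii; have := D2 i hii; have := D3 i hii; have := D1 i.
      have /andP[h0 _] := HH i hii; have /andP[l0 _] := HL i.
      have uL0 : 0 <= CL i / T i.
        have /andP[c0 _] := HC i; exact: divr_ge0 (ltW (HT i)).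
      set uL := CL i / T i; set uHH := CH i / T i.
      have -> : uL / thL i + (uHH - uL) / thH i = (uL * thH i / thL i + (uHH - uL)) / thH i.
        by field; rewrite ?gt_eqF.
      move=> d1 d3; rewrite ler_pdivrMr // ?mul1r => d2.
      have : uL <= uL * thH i / thL i.
        by rewrite ler_pdivlMr // ler_wpM2l.
      lra.
    move=> i hii; have /andP[k1 k2] := @ecw_bounds R nH w (T i) (CL i) (thL i).
    have /andP[h0 _] := HH i hii.
    split; last exact: uH.
    * rewrite Hsum //; apply: ler_wpM2r; last exact: uH.
      rewrite big_nat_cond; apply: sumr_ge0 => j /andP[/andP[j1 j2] _].
      by apply: H9; rewrite j1 -ltnS (leq_trans j2 k2).
    * move=> j /andP[j1 j2]; rewrite !Hext // ?j1 ?(ltnW j1) //=.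
        exact: (leq_trans j2 k2).
      exact: ltnW (leq_trans j2 k2).
    * move=> j /andP[j1 j2]; rewrite Heq ?uH // j2 andbT (leq_trans k1 j1) //.
Qed.
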